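(* For every $\beta>0$ there is $\gamma=\gamma(\beta)>0$ and $n_0$ such that the following holds for all $n\ge n_0$. Let $G$ be an $n$-vertex graph such that for every partition $V(G)=X\cup Y$ with $|X|=\lfloor n/2\rfloor$ it holds that $\left|e(X,Y)-\frac12|X||Y|\right|\le\gamma n^2$. Then $G$ is host-$\beta$-good.
   Context: $e(X,Y)$ is the number of edges of $G$ between $X$ and $Y$. For a vertex $x$ and set $S$, $N_S(x)$ is the set of neighbors of $x$ in $S$ and $d_S(x)=|N_S(x)|$. An $n$-vertex graph $G$ is host-$\beta$-good if there is a partition $V(G)=X\cup Y$ with $|X|=\lfloor n/2\rfloor$ and distinct vertices $x_1,x_1',\dots,x_m,x_m'\in X$ with $m=0.05n$, such that for every $1\le i\le m$: (1) $|d_Y(x_i)-d_Y(x_i')|\le\beta n$; (2) $0.02|Y|\le|N_Y(x_i)\triangle N_Y(x_i')|\le0.98|Y|$; (3) $0.1|Y|\le d_Y(x_i),d_Y(x_i')\le0.9|Y|$. *)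

(* Defs.v *)
From mathcomp Require Import all_boot all_order all_algebra.
From mathcomp Require Import reals.
Set Implicit Arguments. Unset Strict Implicit. Unset Printing Implicit Defensive.
Import Order.TTheory GRing.Theory Num.Theory.
Local Open Scope ring_scope.

(* A (simple) graph on vertex set 'I_n is a symmetric irreflexive relation e. *)

(* e(X,Y): number of ordered pairs (x,y) with x in X, y in Y, xy an edge.
   For disjoint X, Y this is the number of edges between X and Y. *)
Definition e_between (n : nat) (e : rel 'I_n) (X Y : {set 'I_n}) : nat :=
  #|[set p : 'I_n * 'I_n | (p.1 \in X) && (p.2 \in Y) && e p.1 p.2]|.

Definition nbhd_in (n : nat) (e : rel 'I_n) (S : {set 'I_n}) (x : 'I_n) : {set 'I_n} :=
  [set y in S | e x y].

Definition deg_in (n : nat) (e : rel 'I_n) (S : {set 'I_n}) (x : 'I_n) : nat :=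
  #|nbhd_in e S x|.

Definition symdiff (T : finType) (A B : {set T}) : {set T} := (A :\: B) :|: (B :\: A).

(* m = 0.05 n, read as the ceiling  m = ceil(n/20). *)
Definition m_of (n : nat) : nat := (n + 19) %/ 20.

(* Conditions (1)-(3) of host-beta-goodness for one pair (a, a') of X with Y the other side. *)
Definition good_pair (R : realType) (beta : R) (n : nat) (e : rel 'I_n)
  (Y : {set 'I_n}) (a a' : 'I_n) : Prop :=
  let dY := (fun v => (deg_in e Y v)%:R : R) in
  let D := (#|symdiff (nbhd_in e Y a) (nbhd_in e Y a')|%:R : R) in
  let y := (#|Y|%:R : R) in
  [/\ `|dY a - dY a'| <= beta * n%:R,
      (1/50) * y <= D /\ D <= (49/50) * y,
      (1/10) * y <= dY a /\ dY a <= (9/10) * y &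
      (1/10) * y <= dY a' /\ dY a' <= (9/10) * y].

Definition host_good (R : realType) (beta : R) (n : nat) (e : rel 'I_n) : Prop :=
  exists (X : {set 'I_n}) (x x' : 'I_(m_of n) -> 'I_n),
    [/\ #|X| = n./2,
        [/\ injective x, injective x' & forall i j, x i != x' j],
        (forall i, x i \in X /\ x' i \in X) &
        forall i, good_pair beta e (~: X) (x i) (x' i)].

(* Main.v *)
Require Import Defs.
From mathcomp Require Import all_boot all_order all_algebra.
From mathcomp Require Import reals.
From mathcomp Require Import ring lra zify.
From Stdlib Require Import Classical_Prop.
Import Order.TTheory GRing.Theory Num.Theory.

Module PA.
Local Open Scope ring_scope.
Set Implicit Arguments. Unset Strict Implicit. Unset Printing Implicit Defensive.

Lemma cardR (R : realType) (T : finType) (A : {set T}) :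
  (#|A|%:R : R) = \sum_x ((x \in A)%:R : R).
Proof.
rewrite -sum1_card natr_sum big_mkcond /=; apply: eq_bigr => x _.
by case: (x \in A).
Qed.

Section Core.
Variable R : realType.
Variable n : nat.
Variable e : rel 'I_n.
Hypothesis esym : symmetric e.

Definition ind (A : {set 'I_n}) (a : 'I_n) : R := (a \in A)%:R.
Definition Bil (u v : 'I_n -> R) : R := \sum_a \sum_b u a * v b * (e a b)%:R.
Definition Er A B := Bil (ind A) (ind B).
Definition tot (u : 'I_n -> R) := \sum_a u a.

Lemma Bil_ext u u' v v' : u =1 u' -> v =1 v' -> Bil u v = Bil u' v'.
Proof.
move=> hu hv; apply: eq_bigr => a _; apply: eq_bigr => b _.
by rewrite hu hv.
Qed.

Lemma BilDl u1 u2 v : Bil (fun a => u1 a + u2 a) v = Bil u1 v + Bil u2 v.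
Proof.
rewrite /Bil -big_split /=; apply: eq_bigr => a _.
rewrite -big_split /=; apply: eq_bigr => b _; by rewrite !mulrDl.
Qed.

Lemma BilDr u v1 v2 : Bil u (fun b => v1 b + v2 b) = Bil u v1 + Bil u v2.
Proof.
rewrite /Bil -big_split /=; apply: eq_bigr => a _.
rewrite -big_split /=; apply: eq_bigr => b _; by rewrite mulrDr !mulrDl.
Qed.

Lemma BilBr u v1 v2 : Bil u (fun b => v1 b - v2 b) = Bil u v1 - Bil u v2.
Proof.
rewrite /Bil -sumrB /=; apply: eq_bigr => a _.
rewrite -sumrB /=; apply: eq_bigr => b _; by rewrite mulrBr !mulrBl.
Qed.

Lemma BilC u v : Bil u v = Bil v u.
Proof.
rewrite /Bil exchange_big /=; apply: eq_bigr => a _; apply: eq_bigr => b _.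
by rewrite esym; ring.
Qed.

Lemma ErC (A B : {set 'I_n}) : Er A B = Er B A.
Proof. exact: BilC. Qed.

Lemma card_ind (A : {set 'I_n}) : (#|A|%:R : R) = tot (ind A).
Proof. exact: cardR. Qed.

Lemma ebet_Er (X Y : {set 'I_n}) : ((e_between e X Y)%:R : R) = Er X Y.
Proof.
rewrite /e_between cardR /Er /Bil pair_bigA /=; apply: eq_bigr => p _.
rewrite inE /ind.
by rewrite -!natrM; case: (p.1 \in X); case: (p.2 \in Y); case: (e p.1 p.2).
Qed.

Lemma deg_sum (Y : {set 'I_n}) a : ((deg_in e Y a)%:R : R) = \sum_b ind Y b * (e a b)%:R.
Proof.
rewrite /deg_in /nbhd_in cardR; apply: eq_bigr => b _.
rewrite inE /ind.
by rewrite -!natrM; case: (b \in Y); case: (e a b).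
Qed.


Definition dj (A B : {set 'I_n}) := forall x, x \in A -> x \notin B.

Lemma ind_sum3 (U V Z : {set 'I_n}) x : dj U V -> dj U Z -> dj V Z ->
  ind (U :|: V :|: Z) x = ind U x + ind V x + ind Z x.
Proof.
move=> h1 h2 h3; rewrite /ind !inE.
case hU: (x \in U); case hV: (x \in V); case hZ: (x \in Z) => //=;
  rewrite ?add0r ?addr0 //;
  solve [ by move: (h1 x hU); rewrite hV | by move: (h2 x hU); rewrite hZ
        | by move: (h3 x hV); rewrite hZ ].
Qed.

Lemma ind_C (X : {set 'I_n}) x : ind (~: X) x = 1 - ind X x.
Proof. by rewrite /ind inE; case: (x \in X); rewrite /= ?subrr ?subr0. Qed.

Lemma card3 (U V Z : {set 'I_n}) : dj U V -> dj U Z -> dj V Z ->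
  #|U :|: V :|: Z| = (#|U| + #|V| + #|Z|)%N.
Proof.
move=> h1 h2 h3; apply/eqP; rewrite -(eqr_nat R) !natrD !card_ind /tot.
rewrite -!big_split /=; apply/eqP; apply: eq_bigr => x _; exact: ind_sum3.
Qed.

Lemma sub_card (S : {set 'I_n}) j : (j <= #|S|)%N ->
  exists S' : {set 'I_n}, S' \subset S /\ #|S'| = j.
Proof.
elim: j => [|j IH] hj; first by exists (set0 : {set 'I_n}); rewrite sub0set cards0.
have [S' [sS cS]] := IH (ltnW hj).
have : (0 < #|S :\: S'|)%N by rewrite cardsDS // cS subn_gt0.
case/card_gt0P => x; rewrite inE => /andP [xS' xS].
exists (x |: S'); split; first by rewrite subUset sub1set xS.
by rewrite cardsU1 xS' cS.
Qed.

Section MDsec.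
Variables (k : nat) (c0 g : R).
Hypothesis hyp : forall X : {set 'I_n}, #|X| = k -> `|Er X (~: X) - c0| <= g.

Lemma cut_expand (U V Z : {set 'I_n}) : dj U V -> dj U Z -> dj V Z ->
  Er (U :|: V :|: Z) (~: (U :|: V :|: Z)) =
  Bil (fun a => ind U a + ind V a + ind Z a)
      (fun b => (fun _ => 1) b - (ind U b + ind V b + ind Z b)).
Proof.
move=> h1 h2 h3; apply: Bil_ext => x; first exact: ind_sum3.
by rewrite ind_C ind_sum3.
Qed.

Lemma MD (A A' B B' : {set 'I_n}) :
  dj A A' -> dj A B -> dj A B' -> dj A' B -> dj A' B' -> dj B B' ->
  #|A| = #|A'| -> #|B| = #|B'| -> (#|A| + #|B| <= k)%N -> (k + #|A| + #|B| <= n)%N ->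
  `|Er A B + Er A' B' - Er A B' - Er A' B| <= 2 * g.
Proof.
move=> dAA' dAB dAB' dA'B dA'B' dBB' cA cB hk hn.
set S := A :|: A' :|: B :|: B'.
have cS : (#|S| <= #|A| + #|A'| + #|B| + #|B'|)%N.
  rewrite /S; do 3 (rewrite cardsU; apply: (leq_trans (leq_subr _ _)); rewrite leq_add2r).
  by [].
have cCS : (k - #|A| - #|B| <= #|~: S|)%N.
  have := cardsC S; rewrite card_ord => cc; lia.
have [Z [sZ cZ]] := sub_card cCS.
have hZ : forall x, x \in Z -> [/\ x \notin A, x \notin A', x \notin B & x \notin B'].
  move=> x xZ; have := subsetP sZ x xZ; rewrite /S !inE.
  by case: (x \in A); case: (x \in A'); case: (x \in B); case: (x \in B').
have dAZ : dj A Z by move=> x xA; apply/negP => /hZ [] /negP.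
have dA'Z : dj A' Z by move=> x xA; apply/negP => /hZ [] _ /negP.
have dBZ : dj B Z by move=> x xA; apply/negP => /hZ [] _ _ /negP.
have dB'Z : dj B' Z by move=> x xA; apply/negP => /hZ [] _ _ _ /negP.
have dsym : forall U V, dj U V -> dj V U.
  by move=> U V h x xV; apply/negP => /h; rewrite xV.
have hk' : k = (#|A| + #|B| + #|Z|)%N by rewrite cZ; lia.
have h0 : `|Er (A :|: B :|: Z) (~: (A :|: B :|: Z)) - c0| <= g.
  by apply: hyp; rewrite card3 // hk'.
have h1 : `|Er (A' :|: B :|: Z) (~: (A' :|: B :|: Z)) - c0| <= g.
  by apply: hyp; rewrite card3 // ?hk' -?cA //; apply: dsym.
have h2 : `|Er (A :|: B' :|: Z) (~: (A :|: B' :|: Z)) - c0| <= g.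
  by apply: hyp; rewrite card3 // ?hk' -?cB //; apply: dsym.
have h3 : `|Er (A' :|: B' :|: Z) (~: (A' :|: B' :|: Z)) - c0| <= g.
  by apply: hyp; rewrite card3 // ?hk' -?cA -?cB //; apply: dsym.
rewrite !cut_expand // in h0 h1 h2 h3; try by apply: dsym.
rewrite !(BilDl, BilBr, BilDr) in h0 h1 h2 h3.
have E1 := BilC (ind B) (ind A); have E2 := BilC (ind B') (ind A');
have E3 := BilC (ind B') (ind A); have E4 := BilC (ind B) (ind A').
rewrite /Er.
move: h0 h1 h2 h3; rewrite !ler_norml => /andP[h0 h0'] /andP[h1 h1'] /andP[h2 h2'] /andP[h3 h3'].
rewrite E1 E2 E3 E4 in h0 h0' h1 h1' h2 h2' h3 h3'.
apply/andP; split; lra.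
Qed.


Definition D (P Q A : {set 'I_n}) := Er P A - Er Q A.

Lemma transfer (P Q A1 A : {set 'I_n}) :
  dj P Q -> dj P A1 -> dj P A -> dj Q A1 -> dj Q A -> dj A1 A ->
  #|P| = #|Q| -> #|A1| = #|A| -> (#|P| + #|A1| <= k)%N -> (k + #|P| + #|A1| <= n)%N ->
  D P Q A1 - 2 * g <= D P Q A.
Proof.
move=> h1 h2 h3 h4 h5 h6 c1 c2 hk hn.
have := MD h1 h2 h3 h4 h5 h6 c1 c2 hk hn.
rewrite ler_norml /D => /andP[_ h]; lra.
Qed.

End MDsec.

Definition Sf (W : {set 'I_n}) (f : 'I_n -> R) := \sum_a ind W a * f a.

Lemma Sf_lb (W : {set 'I_n}) f M : (forall w, w \in W -> -M <= f w) ->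
  - (M * #|W|%:R) <= Sf W f.
Proof.
move=> h; rewrite card_ind /tot mulr_sumr -sumrN; apply: ler_sum => a _.
rewrite /ind; case aW: (a \in W); last by rewrite mulr0 mul0r oppr0.
by rewrite mulr1 mul1r; exact: h.
Qed.

Lemma Sf_split (W A : {set 'I_n}) f : A \subset W ->
  Sf W f = Sf A f + Sf (W :\: A) f.
Proof.
move=> sAW; rewrite /Sf -big_split /=; apply: eq_bigr => a _.
rewrite -mulrDl /ind !inE; case aA: (a \in A); case aW: (a \in W) => /=; try ring.
by rewrite (subsetP sAW a aA) in aW.
Qed.

Lemma chunk (f : 'I_n -> R) (M c : R) (t : nat) (W : {set 'I_n}) :
  (0 < t)%N -> 0 <= M -> (forall w, w \in W -> -M <= f w) ->
  (forall A : {set 'I_n}, A \subset W -> #|A| = t -> c <= Sf A f) ->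
  #|W|%:R * c - t%:R * (`|c| + t%:R * M) <= t%:R * Sf W f.
Proof.
move=> t0 M0.
have [s] := ubnP #|W|; elim: s W => [|s IH] W // cW hf hA.
have tR : 0 < (t%:R : R) by rewrite ltr0n.
case: (ltnP #|W| t) => ht.
  have h1 := Sf_lb hf.
  have h2 : (#|W|%:R : R) <= t%:R by rewrite ler_nat ltnW.
  have h3 : #|W|%:R * c <= t%:R * `|c|.
    apply: (le_trans (ler_norm _)); rewrite normrM ger0_norm ?ler0n //.
    by apply: ler_wpM2r.
  have h5 : t%:R * (- (M * #|W|%:R)) <= t%:R * Sf W f by rewrite ler_wpM2l // ltW.
  have h6 : M * #|W|%:R <= M * t%:R by rewrite ler_wpM2l.
  have h7 : t%:R * (M * #|W|%:R) <= t%:R * (M * t%:R) by rewrite ler_wpM2l // ltW.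
  lra.
have [A [sA cA]] := sub_card ht.
have sAW : A \subset W by [].
rewrite (Sf_split f sAW).
have hA1 := hA A sAW cA.
have cW' : #|W :\: A| = (#|W| - t)%N by rewrite cardsDS // cA.
have IH' := IH (W :\: A) _ _ _.
have : (#|W :\: A| < s)%N by rewrite cW'; lia.
move=> /IH' {IH'} IH'.
have : #|W :\: A|%:R * c - t%:R * (`|c| + t%:R * M) <= t%:R * Sf (W :\: A) f.
  apply: IH'.
  - by move=> w; rewrite inE => /andP[_ /hf].
  - move=> B sB cB; apply: hA => //; apply: subset_trans sB _; exact: subsetDl.
rewrite cW' natrB //.
nra.
Qed.


Lemma ind_ge0 (A : {set 'I_n}) a : 0 <= ind A a.
Proof. by rewrite /ind ler0n. Qed.

Lemma ind_le1 (A : {set 'I_n}) a : ind A a <= 1.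
Proof. by rewrite /ind; case: (a \in A). Qed.

Lemma e01 a b : 0 <= ((e a b)%:R : R) <= 1.
Proof. by case: (e a b); rewrite /= ?lexx ?ler01. Qed.

Lemma Er_ge0 (A B : {set 'I_n}) : 0 <= Er A B.
Proof.
apply: sumr_ge0 => a _; apply: sumr_ge0 => b _.
by rewrite !mulr_ge0 ?ind_ge0 // ler0n.
Qed.

Lemma Er_le (A B : {set 'I_n}) : Er A B <= #|A|%:R * #|B|%:R.
Proof.
rewrite !card_ind /tot mulr_suml; apply: ler_sum => a _.
rewrite mulr_sumr; apply: ler_sum => b _.
have := e01 a b => /andP[h0 h1].
rewrite -[X in _ <= X]mulr1; apply: ler_wpM2l => //.
by rewrite mulr_ge0 ?ind_ge0.
Qed.

Definition fdeg (P Q : {set 'I_n}) (w : 'I_n) : R :=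
  \sum_b ind P b * (e w b)%:R - \sum_b ind Q b * (e w b)%:R.

Lemma Sf_fdeg (P Q W : {set 'I_n}) : Sf W (fdeg P Q) = Er P W - Er Q W.
Proof.
rewrite [Er P W]ErC [Er Q W]ErC /Sf /fdeg /Er /Bil -sumrB; apply: eq_bigr => a _.
rewrite mulrBr !mulr_sumr; congr (_ - _); apply: eq_bigr => b _; by rewrite mulrA.
Qed.

Lemma fdeg_lb (P Q : {set 'I_n}) w : - (#|Q|%:R) <= fdeg P Q w.
Proof.
rewrite /fdeg card_ind /tot.
have h1 : 0 <= \sum_b ind P b * ((e w b)%:R : R).
  by apply: sumr_ge0 => b _; rewrite mulr_ge0 ?ind_ge0 ?ler0n.
have h2 : \sum_b ind Q b * ((e w b)%:R : R) <= \sum_b ind Q b.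
  apply: ler_sum => b _; have := e01 w b => /andP[_ h].
  by rewrite -[X in _ <= X]mulr1 ler_wpM2l ?ind_ge0.
lra.
Qed.

Lemma dj_sym (U V : {set 'I_n}) : dj U V -> dj V U.
Proof. by move=> h x xV; apply/negP => /h; rewrite xV. Qed.

Lemma dj_subr (U V A : {set 'I_n}) : dj U V -> A \subset V -> dj U A.
Proof. by move=> h sA x xU; apply/negP => xA; move: (h x xU); rewrite (subsetP sA x xA). Qed.

Lemma dj_sub (U V U' V' : {set 'I_n}) : dj U V -> U' \subset U -> V' \subset V -> dj U' V'.
Proof.
move=> h s1 s2 x xU'; apply/negP => xV'.
by move: (h x (subsetP s1 x xU')); rewrite (subsetP s2 x xV').
Qed.

Lemma two_sub (S : {set 'I_n}) p : (2 * p <= #|S|)%N ->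
  exists P1 P2 : {set 'I_n}, [/\ P1 \subset S, P2 \subset S, #|P1| = p, #|P2| = p & dj P1 P2].
Proof.
move=> h.
have [P1 [s1 c1]] := @sub_card S p (leq_trans (leq_pmull _ (isT : (0 < 2)%N)) h).
have h2 : (p <= #|S :\: P1|)%N by rewrite cardsDS // c1; lia.
have [P2 [s2 c2]] := sub_card h2.
exists P1, P2; split => //.
- by apply: subset_trans s2 _; apply: subsetDl.
- move=> x xP1; apply/negP => /(subsetP s2); by rewrite inE xP1.
Qed.

Lemma Sf_ub (W : {set 'I_n}) f M : (forall w, w \in W -> f w <= M) ->
  Sf W f <= M * #|W|%:R.
Proof.
move=> h; rewrite card_ind /tot mulr_sumr; apply: ler_sum => a _.
rewrite /ind; case aW: (a \in W); last by rewrite mulr0 mul0r.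
by rewrite mulr1 mul1r; exact: h.
Qed.

Lemma Sf_opp (W : {set 'I_n}) f : Sf W (fun x => - f x) = - Sf W f.
Proof. by rewrite /Sf -sumrN; apply: eq_bigr => a _; rewrite mulrN. Qed.

Lemma Er_deg (P Y : {set 'I_n}) : Er P Y = Sf P (fun x => (deg_in e Y x)%:R).
Proof.
rewrite /Er /Bil /Sf; apply: eq_bigr => a _; rewrite deg_sum mulr_sumr.
by apply: eq_bigr => b _; rewrite mulrA.
Qed.

Lemma fdeg_ub (P Q : {set 'I_n}) w : fdeg P Q w <= #|P|%:R.
Proof.
rewrite /fdeg card_ind /tot.
have h1 : 0 <= \sum_b ind Q b * ((e w b)%:R : R).
  by apply: sumr_ge0 => b _; rewrite mulr_ge0 ?ind_ge0 ?ler0n.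
have h2 : \sum_b ind P b * ((e w b)%:R : R) <= \sum_b ind P b.
  apply: ler_sum => b _; have := e01 w b => /andP[_ h].
  by rewrite -[X in _ <= X]mulr1 ler_wpM2l ?ind_ge0.
lra.
Qed.

Section NoAdv.
Variables (k : nat) (c0 g : R).
Hypothesis hyp : forall X : {set 'I_n}, #|X| = k -> `|Er X (~: X) - c0| <= g.
Hypothesis g0 : 0 <= g.

Lemma half_adv (P1 Q1 A1 W : {set 'I_n}) (p t : nat) (c : R) :
  dj P1 Q1 -> dj P1 A1 -> dj Q1 A1 -> dj P1 W -> dj Q1 W -> dj A1 W ->
  #|P1| = p -> #|Q1| = p -> #|A1| = t -> #|W| = p -> (0 < t)%N ->
  (p + t <= k)%N -> (k + p + t <= n)%N -> 0 <= c -> c <= D P1 Q1 A1 ->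
  p%:R * (c - 2 * g) - t%:R * (c + 2 * g + t%:R * p%:R) <= t%:R * (Er P1 W - Er Q1 W).
Proof.
move=> d1 d2 d3 d4 d5 d6 cP cQ cA cW t0 hk hn c0' hc.
rewrite -Sf_fdeg.
have h := @chunk (fdeg P1 Q1) p%:R (c - 2 * g) t W t0 (ler0n _ _).
have hab : `|c - 2 * g| <= c + 2 * g.
  rewrite ler_norml; apply/andP; split. move: c0' g0. lra. move: g0. lra.
have : #|W|%:R * (c - 2 * g) - t%:R * (`|c - 2 * g| + t%:R * p%:R) <= t%:R * Sf W (fdeg P1 Q1).
  apply: h.
  - by move=> w _; rewrite -cQ; apply: fdeg_lb.
  - move=> A sA cA'; rewrite Sf_fdeg.
    have := transfer hyp d1 d2 (dj_subr d4 sA) d3 (dj_subr d5 sA) (dj_subr d6 sA) _ _ _ _.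
    rewrite cP cQ cA cA' => /(_ erefl erefl hk hn) h'; rewrite /D in h' hc; lra.
have tp0 : 0 <= (t%:R : R) by [].
have : t%:R * `|c - 2 * g| <= t%:R * (c + 2 * g) by rewrite ler_wpM2l.
rewrite cW; lra.
Qed.

Lemma no_adv (P1 Q1 P2 Q2 A1 A2 : {set 'I_n}) (p t : nat) (c : R) :
  dj P1 Q1 -> dj P1 P2 -> dj P1 Q2 -> dj Q1 P2 -> dj Q1 Q2 -> dj P2 Q2 ->
  dj P1 A1 -> dj Q1 A1 -> dj P2 A1 -> dj P2 A2 -> dj Q2 A2 -> dj Q1 A2 ->
  #|P1| = p -> #|Q1| = p -> #|P2| = p -> #|Q2| = p -> #|A1| = t -> #|A2| = t ->
  (0 < t)%N -> (p + t <= k)%N -> (k + p + t <= n)%N -> 0 <= c ->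
  c <= D P1 Q1 A1 -> c <= D P2 Q2 A2 ->
  2 * (p%:R * (c - 2 * g) - t%:R * (c + 2 * g + t%:R * p%:R)) <= t%:R * p%:R ^+ 2.
Proof.
move=> d1 d2 d3 d4 d5 d6 d7 d8 d9 d10 d11 d12 cP1 cQ1 cP2 cQ2 cA1 cA2 t0 hk hn c0' h1 h2.
have H1 := half_adv d1 d7 d8 d2 d4 (dj_sym d9) cP1 cQ1 cA1 cP2 t0 hk hn c0' h1.
have H2 := half_adv d6 d10 d11 (dj_sym d4) (dj_sym d5) (dj_sym d12) cP2 cQ2 cA2 cQ1 t0 hk hn c0' h2.
have E := ErC Q1 P2.
have B1 := Er_le P1 P2; have B2 := Er_ge0 Q2 Q1.
rewrite cP1 cP2 in B1.
have tp0 : 0 <= (t%:R : R) by [].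
have : t%:R * Er P1 P2 <= t%:R * (p%:R * p%:R) by rewrite ler_wpM2l.
have : 0 <= t%:R * Er Q2 Q1 by rewrite mulr_ge0.
rewrite expr2; rewrite E in H1; lra.
Qed.


Lemma cluster_ineq (A P1 Q1 P2 Q2 : {set 'I_n}) (p t : nat) (dl : R) :
  dj P1 Q1 -> dj P1 P2 -> dj P1 Q2 -> dj Q1 P2 -> dj Q1 Q2 -> dj P2 Q2 ->
  dj P1 A -> dj Q1 A -> dj P2 A -> dj Q2 A ->
  #|P1| = p -> #|Q1| = p -> #|P2| = p -> #|Q2| = p -> #|A| = t ->
  (0 < t)%N -> (p + t <= k)%N -> (k + p + t <= n)%N -> dl <= p%:R ->
  (forall a, a \in A -> p%:R - dl <= fdeg P1 Q1 a) ->
  (forall a, a \in A -> p%:R - dl <= fdeg P2 Q2 a) ->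
  2 * (p%:R * (t%:R * (p%:R - dl) - 2 * g) - t%:R * (t%:R * (p%:R - dl) + 2 * g + t%:R * p%:R))
     <= t%:R * p%:R ^+ 2.
Proof.
move=> d1 d2 d3 d4 d5 d6 d7 d8 d9 d10 cP1 cQ1 cP2 cQ2 cA t0 hk hn hdl f1 f2.
have hc : forall P Q, (forall a, a \in A -> p%:R - dl <= fdeg P Q a) ->
    t%:R * (p%:R - dl) <= D P Q A.
  move=> P Q hf; rewrite /D -Sf_fdeg -cA.
  have h : - ((dl - p%:R) * #|A|%:R) <= Sf A (fdeg P Q).
    by apply: Sf_lb => w /hf; lra.
  lra.
apply: (no_adv (P1 := P1) (Q1 := Q1) (P2 := P2) (Q2 := Q2) (A1 := A) (A2 := A)) => //.
- by apply: mulr_ge0 => //; rewrite subr_ge0.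
- exact: hc.
- exact: hc.
Qed.


Lemma exists_chunk (P Q Y : {set 'I_n}) (p t : nat) :
  #|P| = p -> (0 < p)%N -> (0 < t)%N -> 17 * t%:R < (#|Y|%:R : R) ->
  (8/10) * p%:R * #|Y|%:R <= D P Q Y ->
  exists A : {set 'I_n}, [/\ A \subset Y, #|A| = t & (7/10) * t%:R * p%:R <= D P Q A].
Proof.
move=> cP p0 t0 hy hD.
case: (classic (exists A : {set 'I_n}, [/\ A \subset Y, #|A| = t & (7/10) * t%:R * p%:R <= D P Q A])) => // hno.
exfalso.
have h := @chunk (fun x => - fdeg P Q x) p%:R (- ((7/10) * t%:R * p%:R)) t Y t0 (ler0n _ _).
have : #|Y|%:R * - ((7/10) * t%:R * p%:R) - t%:R * (`|- ((7/10) * t%:R * p%:R)| + t%:R * p%:R) <=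
       t%:R * Sf Y (fun x => - fdeg P Q x).
  apply: h.
  - by move=> w _; rewrite lerN2 -cP; apply: fdeg_ub.
  - move=> A sA cA; rewrite Sf_opp Sf_fdeg lerN2 -/(D P Q A).
    case: (leP (D P Q A) ((7/10) * t%:R * p%:R)) => // hlt.
    by exfalso; apply: hno; exists A; split => //; apply: ltW.
rewrite Sf_opp Sf_fdeg -/(D P Q Y) normrN ger0_norm; last first.
  by rewrite !mulr_ge0 ?ler0n //; lra.
have tR : 0 < (t%:R : R) by rewrite ltr0n.
have pR : 0 < (p%:R : R) by rewrite ltr0n.
have k1 : 0 < t%:R * p%:R * (#|Y|%:R - 17 * t%:R) :> R.
  by rewrite !mulr_gt0 // subr_gt0.
have k2 : t%:R * ((8/10) * p%:R * #|Y|%:R) <= t%:R * D P Q Y :> R.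
  by rewrite ler_wpM2l // ltW.
lra.
Qed.

Lemma HL_ineq (Y H L : {set 'I_n}) (p t : nat) :
  dj H L -> dj H Y -> dj L Y ->
  (forall x, x \in H -> (9/10) * #|Y|%:R <= (deg_in e Y x)%:R :> R) ->
  (forall x, x \in L -> (deg_in e Y x)%:R <= (1/10) * (#|Y|%:R : R)) ->
  (2 * p <= #|H|)%N -> (2 * p <= #|L|)%N -> (0 < p)%N -> (0 < t)%N ->
  17 * t%:R < (#|Y|%:R : R) -> (p + t <= k)%N -> (k + p + t <= n)%N ->
  2 * (p%:R * ((7/10) * t%:R * p%:R - 2 * g) - t%:R * ((7/10) * t%:R * p%:R + 2 * g + t%:R * p%:R))
     <= t%:R * p%:R ^+ 2.
Proof.
move=> dHL dHY dLY hH hL cH cL p0 t0 hy hk hn.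
have [P1 [P2 [sP1 sP2 cP1 cP2 dP]]] := two_sub cH.
have [Q1 [Q2 [sQ1 sQ2 cQ1 cQ2 dQ]]] := two_sub cL.
have hD : forall P Q : {set 'I_n}, P \subset H -> Q \subset L -> #|P| = p -> #|Q| = p ->
    (8/10) * p%:R * #|Y|%:R <= D P Q Y.
  move=> P Q sP sQ cP cQ; rewrite /D !Er_deg.
  have h1 : - (- ((9/10) * #|Y|%:R) * #|P|%:R) <= Sf P (fun x => (deg_in e Y x)%:R).
    by apply: Sf_lb => w /(subsetP sP) /hH; lra.
  have h2 : Sf Q (fun x => (deg_in e Y x)%:R) <= (1/10) * #|Y|%:R * #|Q|%:R.
    by apply: Sf_ub => w /(subsetP sQ) /hL.
  rewrite cP cQ in h1 h2; lra.
have [A1 [sA1 cA1 hA1]] := exists_chunk cP1 p0 t0 hy (hD _ _ sP1 sQ1 cP1 cQ1).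
have [A2 [sA2 cA2 hA2]] := exists_chunk cP2 p0 t0 hy (hD _ _ sP2 sQ2 cP2 cQ2).
apply: (no_adv (P1 := P1) (Q1 := Q1) (P2 := P2) (Q2 := Q2) (A1 := A1) (A2 := A2)) => //.
- exact: dj_sub dHL sP1 sQ1.
- exact: dj_sub dHL sP1 sQ2.
- exact: dj_sym (dj_sub dHL sP2 sQ1).
- exact: dj_sub dHL sP2 sQ2.
- exact: dj_sub dHY sP1 sA1.
- exact: dj_sub dLY sQ1 sA1.
- exact: dj_sub dHY sP2 sA1.
- exact: dj_sub dHY sP2 sA2.
- exact: dj_sub dLY sQ2 sA2.
- exact: dj_sub dLY sQ1 sA2.
- by rewrite !mulr_ge0 ?ler0n //; lra.
Qed.

End NoAdv.

Lemma fdeg_twin (Y N P Q : {set 'I_n}) a : N \subset Y -> P \subset N -> Q \subset Y :\: N ->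
  #|P|%:R - #|symdiff N (nbhd_in e Y a)|%:R <= fdeg P Q a.
Proof.
move=> sNY sPN sQ; rewrite /fdeg !card_ind /tot -!sumrB; apply: ler_sum => b _.
move: (subsetP sNY b) (subsetP sPN b) (subsetP sQ b).
rewrite /ind /symdiff /nbhd_in !inE.
case: (b \in P); case: (b \in Q); case: (b \in N); case: (b \in Y); case: (e a b) => /= h1 h2 h3;
  first [ by move: (h1 isT) | by move: (h2 isT) | by move: (h3 isT) | lra ].
Qed.

Lemma fdeg_anti (Y N P Q : {set 'I_n}) a : N \subset Y -> P \subset Y :\: N -> Q \subset N ->
  #|P|%:R - (#|Y|%:R - #|symdiff N (nbhd_in e Y a)|%:R) <= fdeg P Q a.
Proof.
move=> sNY sPN sQ; rewrite /fdeg !card_ind /tot -!sumrB; apply: ler_sum => b _.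
move: (subsetP sNY b) (subsetP sPN b) (subsetP sQ b).
rewrite /ind /symdiff /nbhd_in !inE.
case: (b \in P); case: (b \in Q); case: (b \in N); case: (b \in Y); case: (e a b) => /= h1 h2 h3;
  first [ by move: (h1 isT) | by move: (h2 isT) | by move: (h3 isT) | lra ].
Qed.

End Core.

End PA.
Import PA.

Module PB.
Local Open Scope ring_scope.
Set Implicit Arguments. Unset Strict Implicit. Unset Printing Implicit Defensive.

Lemma pigeon (B : nat) (f : 'I_B.+1 -> nat) m :
  (m * B.+1 <= \sum_j f j)%N -> exists j, (m <= f j)%N.
Proof.
move=> h; case: (classic (exists j, (m <= f j)%N)) => // hno; exfalso.
have hlt : forall j, (f j < m)%N.
  by move=> j; rewrite ltnNge; apply/negP => hj; apply: hno; exists j.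
have h0 : (0 < m)%N by have := hlt ord0; lia.
have : (\sum_j f j <= \sum_(j : 'I_B.+1) m.-1)%N.
  by apply: leq_sum => j _; have := hlt j; lia.
rewrite sum_nat_const card_ord; nia.
Qed.

Lemma same_bucket (d1 d2 w : nat) : (0 < w)%N -> (d1 %/ w = d2 %/ w)%N -> (d1 < d2 + w)%N.
Proof.
move=> w0 h; rewrite (divn_eq d1 w) (divn_eq d2 w) h.
have := ltn_pmod d1 w0; lia.
Qed.

Lemma aux1 (a b c : nat) : (a < c)%N -> (2 * c <= a + b)%N -> (c <= b)%N.
Proof. lia. Qed.
Lemma aux2 (a c : nat) : (0 < c)%N -> (2 * c <= a)%N -> (0 < a)%N.
Proof. lia. Qed.

Section App.
Variable R : realType.
Variable n : nat.
Variable e : rel 'I_n.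
Hypothesis esym : symmetric e.
Variables (k : nat) (c0 g : R).
Hypothesis hyp : forall X : {set 'I_n}, #|X| = k -> `|Er R e X (~: X) - c0| <= g.
Hypothesis g0 : 0 <= g.
Variable X : {set 'I_n}.
Hypothesis cX : #|X| = k.
Variable beta : R.

Let Y := ~: X.
Let y : R := #|Y|%:R.
Let dY (x : 'I_n) : R := (deg_in e Y x)%:R.

Definition Kset := [set x in X | ((1/10) * y <= dY x) && (dY x <= (9/10) * y)].

Lemma djXY : dj X Y.
Proof. by move=> x xX; rewrite /Y inE xX. Qed.

Section FindPair.
Variables (w B p t : nat).
Hypothesis w0 : (0 < w)%N.
Hypothesis hw : w%:R <= beta * n%:R.
Hypothesis hB : forall x, ((deg_in e Y x) %/ w <= B)%N.
Hypothesis hp : (20 * p <= #|Y|)%N.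
Hypothesis hp50 : y / 50 <= p%:R.
Hypothesis t0 : (0 < t)%N.
Hypothesis hk : (p + t <= k)%N.
Hypothesis hn : (k + p + t <= n)%N.
Hypothesis hy0 : (0 < #|Y|)%N.
Hypothesis NC1 : t%:R * p%:R ^+ 2 <
  2 * (p%:R * (t%:R * (p%:R - y / 50) - 2 * g) - t%:R * (t%:R * (p%:R - y / 50) + 2 * g + t%:R * p%:R)).

Lemma find_pair (U : {set 'I_n}) : U \subset Kset -> (2 * t * B.+1 <= #|U|)%N ->
  exists a a', [/\ a \in U, a' \in U, a != a' & good_pair beta e Y a a'].
Proof.
move=> sUK hU.
pose bk (x : 'I_n) : 'I_B.+1 := inord ((deg_in e Y x) %/ w)%N.
have bkE : forall x, (bk x : nat) = ((deg_in e Y x) %/ w)%N.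
  by move=> x; rewrite /bk inordK // ltnS hB.
pose F (j : 'I_B.+1) := [set x in U | bk x == j].
have hsum : #|U| = (\sum_j #|F j|)%N.
  rewrite -sum1_card (partition_big bk predT) //=; apply: eq_bigr => j _.
  by rewrite -sum1_card; apply: eq_bigl => x; rewrite /F inE.
have [j hj] : exists j : 'I_B.+1, (2 * t <= #|F j|)%N by apply: pigeon; rewrite -hsum.
have FU : F j \subset U by apply/subsetP => x; rewrite inE => /andP[].
have KX : Kset \subset X by apply/subsetP => x; rewrite inE => /andP[].
have : (0 < #|F j|)%N by apply: aux2 t0 hj.
case/card_gt0P => r rF.
have rU : r \in U := subsetP FU r rF.
have rK : r \in Kset := subsetP sUK r rU.
have rKb := rK; rewrite inE in rKb; case/andP: rKb => rX /andP[rlo rhi].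
pose del a : R := #|symdiff (nbhd_in e Y r) (nbhd_in e Y a)|%:R.
have yR : 0 < y by rewrite ltr0n.
case: (classic (exists a, [/\ a \in F j, a != r & (1/50) * y <= del a <= (49/50) * y])).
  case=> a [aF anr /andP[ha1 ha2]].
  have aU : a \in U := subsetP FU a aF.
  have aK : a \in Kset := subsetP sUK a aU.
  have aKb := aK; rewrite inE in aKb; case/andP: aKb => aX /andP[alo ahi].
  exists r, a; split => //; first by rewrite eq_sym.
  have hb : ((deg_in e Y r) %/ w)%N = ((deg_in e Y a) %/ w)%N.
    move: rF aF; rewrite !inE -!bkE => /andP[_ /eqP ->] /andP[_ /eqP ->] //.
  have b1 := same_bucket w0 hb; have b2 := same_bucket w0 (sym_eq hb).
  rewrite /good_pair; split.
  - apply: le_trans hw; apply: ltW; apply/ltr_normlP; split.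
    + by rewrite opprB ltrBlDr -!natrD ltr_nat addnC.
    + by rewrite ltrBlDr -!natrD ltr_nat addnC.
  - exact: (conj ha1 ha2).
  - exact: (conj rlo rhi).
  - exact: (conj alo ahi).
move=> hno.
pose T := [set a in F j | del a < y / 50].
pose T' := [set a in F j | (49/50) * y < del a].
have cover : F j \subset T :|: T'.
  apply/subsetP => a aF.
  have key : (del a < y / 50) || ((49/50) * y < del a).
    case: (eqVneq a r) => [->|anr].
      by rewrite /del /symdiff setDv setU0 cards0; apply/orP; left; lra.
    case: (ltrP (del a) (y / 50)) => h1 //=.
    case: (ltrP ((49/50) * y) (del a)) => h2 //=.
    by exfalso; apply: hno; exists a; split => //; apply/andP; split; lra.
  move: key aF; rewrite !inE => key /andP[-> ->] /=; exact: key.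
have cTT : (2 * t <= #|T| + #|T'|)%N.
  apply: (leq_trans hj); apply: (leq_trans (subset_leq_card cover)).
  by rewrite cardsU leq_subr.
set N := nbhd_in e Y r.
have sNY : N \subset Y by apply/subsetP => x; rewrite inE => /andP[].
have cN : #|N|%:R = dY r by [].
have cYN : (#|Y :\: N|%:R : R) = y - dY r by rewrite cardsDS // natrB ?subset_leq_card.
have h2p : (2 * p <= #|N|)%N.
  by rewrite -(ler_nat R) cN natrM; move: (ler_nat R (20 * p) #|Y|); rewrite hp natrM; lra.
have h2q : (2 * p <= #|Y :\: N|)%N.
  by rewrite -(ler_nat R) cYN natrM; move: (ler_nat R (20 * p) #|Y|); rewrite hp natrM; lra.
have dNN : dj N (Y :\: N) by move=> x xN; rewrite inE xN.
have TX : forall A : {set 'I_n}, A \subset T -> A \subset X.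
  move=> A sA; apply/subsetP => x /(subsetP sA); rewrite !inE => /andP[/andP[xU _] _].
  exact: (subsetP KX x (subsetP sUK x xU)).
have T'X : forall A : {set 'I_n}, A \subset T' -> A \subset X.
  move=> A sA; apply/subsetP => x /(subsetP sA); rewrite !inE => /andP[/andP[xU _] _].
  exact: (subsetP KX x (subsetP sUK x xU)).
have dYX : dj Y X := dj_sym djXY.
have sYN : Y :\: N \subset Y by apply: subsetDl.
have [P1 [P2 [sP1 sP2 cP1 cP2 dP]]] := two_sub h2p.
have [Q1 [Q2 [sQ1 sQ2 cQ1 cQ2 dQ]]] := two_sub h2q.
case: (leqP t #|T|) => hT.
  have [A [sA cA]] := sub_card hT.
  have := @cluster_ineq R n e esym k c0 g hyp g0 A P1 Q1 P2 Q2 p t (y / 50).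
  move=> /(_ (dj_sub dNN sP1 sQ1) dP (dj_sub dNN sP1 sQ2) (dj_sym (dj_sub dNN sP2 sQ1)) dQ
    (dj_sub dNN sP2 sQ2)).
  move=> /(_ (dj_sub dYX (subset_trans sP1 sNY) (TX _ sA))
             (dj_sub dYX (subset_trans sQ1 sYN) (TX _ sA))
             (dj_sub dYX (subset_trans sP2 sNY) (TX _ sA))
             (dj_sub dYX (subset_trans sQ2 sYN) (TX _ sA))).
  move=> /(_ cP1 cQ1 cP2 cQ2 cA t0 hk hn hp50) H.
  have : False; last by [].
  suff : 2 * (p%:R * (t%:R * (p%:R - y / 50) - 2 * g) - t%:R * (t%:R * (p%:R - y / 50) + 2 * g + t%:R * p%:R))
     <= t%:R * p%:R ^+ 2 by move: NC1; lra.
  apply: H.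
  - move=> a /(subsetP sA); rewrite inE => /andP[_ ha].
    have := fdeg_twin R e a sNY sP1 sQ1; rewrite cP1 -/(del a); lra.
  - move=> a /(subsetP sA); rewrite inE => /andP[_ ha].
    have := fdeg_twin R e a sNY sP2 sQ2; rewrite cP2 -/(del a); lra.
have hT' : (t <= #|T'|)%N by apply: aux1 hT cTT.
have [A [sA cA]] := sub_card hT'.
have := @cluster_ineq R n e esym k c0 g hyp g0 A Q1 P1 Q2 P2 p t (y / 50).
move=> /(_ (dj_sym (dj_sub dNN sP1 sQ1)) dQ (dj_sym (dj_sub dNN sP2 sQ1)) (dj_sub dNN sP1 sQ2) dP
    (dj_sym (dj_sub dNN sP2 sQ2))).
move=> /(_ (dj_sub dYX (subset_trans sQ1 sYN) (T'X _ sA))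
           (dj_sub dYX (subset_trans sP1 sNY) (T'X _ sA))
           (dj_sub dYX (subset_trans sQ2 sYN) (T'X _ sA))
           (dj_sub dYX (subset_trans sP2 sNY) (T'X _ sA))).
move=> /(_ cQ1 cP1 cQ2 cP2 cA t0 hk hn hp50) H.
have : False; last by [].
suff : 2 * (p%:R * (t%:R * (p%:R - y / 50) - 2 * g) - t%:R * (t%:R * (p%:R - y / 50) + 2 * g + t%:R * p%:R))
   <= t%:R * p%:R ^+ 2 by move: NC1; lra.
apply: H.
- move=> a /(subsetP sA); rewrite inE => /andP[_ ha].
  have := fdeg_anti R e a sNY sQ1 sP1; rewrite cQ1 -/(del a) -/y; lra.
- move=> a /(subsetP sA); rewrite inE => /andP[_ ha].
  have := fdeg_anti R e a sNY sQ2 sP2; rewrite cQ2 -/(del a) -/y; lra.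
Qed.

End FindPair.

Lemma dY_le x : dY x <= y.
Proof.
rewrite /dY /y ler_nat /deg_in; apply: subset_leq_card.
by apply/subsetP => z; rewrite inE => /andP[].
Qed.

Lemma sum3 (c1 c2 c3 : R) (A1 A2 A3 : {set 'I_n}) :
  \sum_a (c1 * ind R A1 a + c2 * ind R A2 a + c3 * ind R A3 a) =
  c1 * #|A1|%:R + c2 * #|A2|%:R + c3 * #|A3|%:R.
Proof. by rewrite !big_split /= -!mulr_sumr !card_ind. Qed.

Section KCount.
Variables (q t : nat).
Hypothesis q0 : (0 < q)%N.
Hypothesis t0 : (0 < t)%N.
Hypothesis hy : 17 * t%:R < y.
Hypothesis hk : (q + t <= k)%N.
Hypothesis hn : (k + q + t <= n)%N.
Hypothesis hc0 : c0 = (1/2) * k%:R * y.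
Hypothesis NC2 : t%:R * q%:R ^+ 2 <
  2 * (q%:R * ((7/10) * t%:R * q%:R - 2 * g) - t%:R * ((7/10) * t%:R * q%:R + 2 * g + t%:R * q%:R)).

Lemma K_count : (4/9) * y * k%:R - 3 * y * q%:R - 2 * g <= y * #|Kset|%:R.
Proof.
pose H := [set x in X | (9/10) * y < dY x].
pose L := [set x in X | dY x < (1/10) * y].
have HX : H \subset X by apply/subsetP => x; rewrite inE => /andP[].
have LX : L \subset X by apply/subsetP => x; rewrite inE => /andP[].
have hE := hyp cX; rewrite -/Y Er_deg in hE.
have yR : 0 <= y by [].
have hnot : ~ ((2 * q <= #|H|)%N /\ (2 * q <= #|L|)%N).
  case=> cH cL.
  have := @HL_ineq R n e esym k c0 g hyp g0 Y H L q t.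
  move=> /(_ _ _ _ _ _ cH cL q0 t0 hy hk hn).
  have dHL : dj H L.
    move=> x; rewrite !inE => /andP[_ h1]; apply/negP => /andP[_ h2]. 
    by move: h1 h2; rewrite /dY; lra.
  have dHY : dj H Y := dj_sub djXY HX (subxx _).
  have dLY : dj L Y := dj_sub djXY LX (subxx _).
  move=> /(_ dHL dHY dLY) H1.
  have : 2 * (q%:R * ((7/10) * t%:R * q%:R - 2 * g) - t%:R * ((7/10) * t%:R * q%:R + 2 * g + t%:R * q%:R))
     <= t%:R * q%:R ^+ 2.
    apply: H1.
    - by move=> x; rewrite inE => /andP[_ h]; apply: ltW.
    - by move=> x; rewrite inE => /andP[_ h]; apply: ltW.
  by move: NC2; lra.
move: hE; rewrite ler_norml /Sf => /andP[hE1 hE2].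
have cXR : (#|X|%:R : R) = k%:R by rewrite cX.
case: (ltnP #|H| (2 * q)) => cH.
  have hb : \sum_a ind R X a * dY a <=
      \sum_a ((1/10) * y * ind R X a + (8/10) * y * ind R Kset a + (9/10) * y * ind R H a).
    apply: ler_sum => a _; rewrite /ind /Kset /H !inE.
    case aX: (a \in X) => /=; last by rewrite mul0r !mulr0 !addr0.
    have := dY_le a.
    case: (ltrP (dY a) ((1/10) * y)) => h1 /=;
    case: (lerP (dY a) ((9/10) * y)) => h2 /=; lra.
  rewrite sum3 cXR in hb.
  have : ((#|H|.+1)%:R : R) <= (2 * q)%:R by rewrite ler_nat.
  rewrite natrM -addn1 natrD => hH.
  have : y * #|H|%:R <= y * (2 * q%:R - 1) by rewrite ler_wpM2l //; lra.
  have p1 : 0 <= y * k%:R by rewrite mulr_ge0.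
  have p2 : 0 <= y * q%:R by rewrite mulr_ge0.
  rewrite hc0 in hE1; move: g0; lra.
have cL : (#|L| < 2 * q)%N by case: (leqP (2 * q) #|L|) => // h; exfalso; apply: hnot.
have hb : \sum_a (9/10) * y * ind R H a <= \sum_a ind R X a * dY a.
  apply: ler_sum => a _; rewrite /ind /H !inE.
  case aX: (a \in X) => /=; last by rewrite mul0r mulr0.
  case: (ltrP ((9/10) * y) (dY a)) => h1 /=; rewrite ?mulr1 ?mul1r ?mulr0; try lra.
  by rewrite /dY ler0n.
have cH' : \sum_a ind R H a = #|H|%:R by rewrite card_ind.
rewrite -mulr_sumr cH' in hb.
have hc : \sum_a ind R X a <= \sum_a (1 * ind R Kset a + 1 * ind R H a + 1 * ind R L a).
  apply: ler_sum => a _; rewrite /ind /Kset /H /L !inE.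
  case aX: (a \in X) => /=; last by rewrite !mulr0 !addr0.
  case: (ltrP ((9/10) * y) (dY a)) => h1 /=;
  case: (ltrP (dY a) ((1/10) * y)) => h2 /=;
  case: (lerP ((1/10) * y) (dY a)) => h3 /=;
  case: (lerP (dY a) ((9/10) * y)) => h4 /=; lra.
have cX' : \sum_a ind R X a = #|X|%:R by rewrite card_ind.
rewrite sum3 cX' cXR in hc.
have : ((#|L|.+1)%:R : R) <= (2 * q)%:R by rewrite ler_nat.
rewrite natrM -addn1 natrD => hL.
have : y * #|L|%:R <= y * (2 * q%:R - 1) by rewrite ler_wpM2l //; lra.
have : y * k%:R <= y * (#|Kset|%:R + #|H|%:R + #|L|%:R) by rewrite ler_wpM2l //; lra.
have p1 : 0 <= y * k%:R by rewrite mulr_ge0.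
have p2 : 0 <= y * q%:R by rewrite mulr_ge0.
rewrite hc0 in hE2; move: g0; lra.
Qed.

End KCount.
End App.

End PB.
Import PB.

Module PC.
Set Implicit Arguments. Unset Strict Implicit. Unset Printing Implicit Defensive.

Lemma auxB L m j a b c s : L + 2 * m <= c -> j.+1 <= m -> s <= 2 * j -> a <= s -> a + b = c -> L <= b.
Proof. lia. Qed.

Section Build.
Variables (n : nat) (K : {set 'I_n}) (P : 'I_n -> 'I_n -> Prop) (m L : nat).
Hypothesis hfind : forall U : {set 'I_n}, U \subset K -> L <= #|U| ->
  exists a a', [/\ a \in U, a' \in U, a != a' & P a a'].
Hypothesis hK : L + 2 * m <= #|K|.

Definition Inv j (f1 f2 : nat -> 'I_n) :=
  [/\ (forall i, i < j -> [/\ f1 i \in K, f2 i \in K & P (f1 i) (f2 i)]),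
     (forall i i', i < j -> i' < j -> f1 i = f1 i' -> i = i'),
     (forall i i', i < j -> i' < j -> f2 i = f2 i' -> i = i') &
     (forall i i', i < j -> i' < j -> f1 i != f2 i')].

Lemma build j : j <= m -> exists f1 f2, Inv j f1 f2.
Proof.
elim: j => [_|j IH hj].
  have [a [a' [aK _ _ _]]] := hfind (subxx K) (leq_trans (leq_addr _ _) hK).
  by exists (fun _ => a), (fun _ => a); split.
have [f1 [f2 [h1 h2 h3 h4]]] := IH (ltnW hj).
pose S := [set f1 (val i) | i : 'I_j] :|: [set f2 (val i) | i : 'I_j].
have cS : #|S| <= 2 * j.
  rewrite /S; apply: (leq_trans (leq_card_setU _ _)).
  have c1 : #|[set f1 (val i) | i : 'I_j]| <= j.
    by apply: (leq_trans (leq_imset_card _ _)); rewrite card_ord.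
  have c2 : #|[set f2 (val i) | i : 'I_j]| <= j.
    by apply: (leq_trans (leq_imset_card _ _)); rewrite card_ord.
  lia.
have cU : L <= #|K :\: S|.
  have := cardsID S K; have : #|K :&: S| <= #|S| by apply: subset_leq_card; apply: subsetIr.
  by move=> h1' h2'; apply: (auxB hK hj cS h1' h2').
have [a [a' [aU a'U ana' hP]]] := hfind (subsetDl K S) cU.
have nS : forall z i, i < j -> z \in K :\: S -> z != f1 i /\ z != f2 i.
  move=> z i hi; rewrite inE => /andP[zS _]; split; apply/eqP => hz; move: zS; rewrite hz.
  - by rewrite /S inE; apply/negP; rewrite negbK; apply/orP; left; apply/imsetP; exists (Ordinal hi).
  - by rewrite /S inE; apply/negP; rewrite negbK; apply/orP; right; apply/imsetP; exists (Ordinal hi).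
exists (fun i => if i == j then a else f1 i), (fun i => if i == j then a' else f2 i).
have lt1 : forall i, i < j.+1 -> i != j -> i < j.
  by move=> i; rewrite ltnS ltn_neqAle => h1' h2'; rewrite h2' h1'.
split.
- move=> i; rewrite ltnS leq_eqVlt => /orP[/eqP ->|hi]; first by rewrite eqxx; split => //;
    [exact: (subsetP (subsetDl K S) a aU) | exact: (subsetP (subsetDl K S) a' a'U)].
  by rewrite (ltn_eqF hi); apply: h1.
- move=> i i' hi hi'; rewrite /=.
  case: (eqVneq i j) => [ei|nij]; case: (eqVneq i' j) => [ei'|ni'j].
  + by rewrite ei ei'.
  + move=> h; exfalso.
    have [n1 n2] := nS a i' (lt1 _ hi' ni'j) aU; by rewrite h eqxx in n1.
  + move=> h; exfalso.
    have [n1 n2] := nS a i (lt1 _ hi nij) aU; by rewrite -h eqxx in n1.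
  + apply: h2; exact: lt1.
- move=> i i' hi hi'; rewrite /=.
  case: (eqVneq i j) => [ei|nij]; case: (eqVneq i' j) => [ei'|ni'j].
  + by rewrite ei ei'.
  + move=> h; exfalso.
    have [n1 n2] := nS a' i' (lt1 _ hi' ni'j) a'U; by rewrite h eqxx in n2.
  + move=> h; exfalso.
    have [n1 n2] := nS a' i (lt1 _ hi nij) a'U; by rewrite -h eqxx in n2.
  + apply: h3; exact: lt1.
- move=> i i' hi hi'; rewrite /=.
  case: (eqVneq i j) => [ei|nij]; case: (eqVneq i' j) => [ei'|ni'j].
  + exact: ana'.
  + by have [n1 n2] := nS a i' (lt1 _ hi' ni'j) aU.
  + have [n1 n2] := nS a' i (lt1 _ hi nij) a'U; by rewrite eq_sym.
  + apply: h4; exact: lt1.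
Qed.

End Build.

End PC.
Import PC.

Module PD.
Local Open Scope ring_scope.

Section Num.
Variable R : realType.
Variables (t p q y g n T0 N gm k m : R).
Hypothesis hn : (10 * 100) <= n.
Hypothesis hT0 : T0 = (40 * 100) * N.
Hypothesis hN : 1 <= N.
Hypothesis ht0 : 0 < t.
Hypothesis ht1 : n <= 2 * t * T0.
Hypothesis ht2 : t * T0 <= n.
Hypothesis hgm : gm * ((800 * 100) * T0) = 1.
Hypothesis hg : g = gm * n ^+ 2.
Hypothesis hy : n / 2 <= y.

Lemma gm0 : 0 < gm.
Proof.
have hn_ := hn; have hT0_ := hT0; have hN_ := hN; have ht0_ := ht0; have ht1_ := ht1; have ht2_ := ht2; have hgm_ := hgm; have hg_ := hg; have hy_ := hy.
have T0p : 0 < T0 by lra.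
have : 0 < gm * ((800 * 100) * T0) by rewrite hgm.
by rewrite pmulr_lgt0 //; lra.
Qed.

Lemma g0 : 0 <= g.
Proof. by rewrite hg mulr_ge0 ?sqr_ge0 // ltW // gm0. Qed.

Lemma t4000 : (40 * 100) * t <= n.
Proof.
have hn_ := hn; have hT0_ := hT0; have hN_ := hN; have ht0_ := ht0; have ht1_ := ht1; have ht2_ := ht2; have hgm_ := hgm; have hg_ := hg; have hy_ := hy.
have : t * (40 * 100) <= t * T0 by apply: ler_wpM2l; [exact: ltW | lra].
lra.
Qed.

Lemma key_tn : (80 * 100) * g < t * n.
Proof.
have hn_ := hn; have hT0_ := hT0; have hN_ := hN; have ht0_ := ht0; have ht1_ := ht1; have ht2_ := ht2; have hgm_ := hgm; have hg_ := hg; have hy_ := hy.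
have T0p : 0 < T0 by lra.
have h1 : n * n <= n * (2 * t * T0) by apply: ler_wpM2l; lra.
have h2 : g * ((800 * 100) * T0) = n * n by rewrite hg mulrAC hgm mul1r expr2.
have : 0 < (t * n - (80 * 100) * g) * T0.
  have : 0 < n * n by rewrite mulr_gt0 //; lra.
  lra.
by rewrite pmulr_lgt0 //; lra.
Qed.

Lemma NC1_num : 20 * p <= y -> y < 20 * p + 20 ->
  t * p ^+ 2 < 2 * (p * (t * (p - y / 50) - 2 * g) - t * (t * (p - y / 50) + 2 * g + t * p)).
Proof.
have hn_ := hn; have hT0_ := hT0; have hN_ := hN; have ht0_ := ht0; have ht1_ := ht1; have ht2_ := ht2; have hgm_ := hgm; have hg_ := hg; have hy_ := hy.
move=> h1 h2.
have h4 := t4000; have hk := key_tn; have hg0 := g0.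
have hp : 0 < p by lra.
have htp : t <= p by lra.
have f1 : t * p * (3 * n / (10 * 100)) <= t * p * (p - y / 25 - 4 * t).
  by apply: ler_wpM2l; [apply: mulr_ge0; lra | lra].
have f2 : 0 <= t * t * y by rewrite !mulr_ge0 ?ltW //; lra.
have f3 : g * t <= g * p by apply: ler_wpM2l.
have f4 : 0 < p * (t * n - (80 * 100) * g) by rewrite mulr_gt0 //; lra.
have f5 : 0 <= t * p * n by rewrite !mulr_ge0 //; lra.
rewrite expr2; lra.
Qed.

Lemma NC2_num : 100 * q <= n -> n < 100 * q + 100 ->
  t * q ^+ 2 < 2 * (q * ((7/10) * t * q - 2 * g) - t * ((7/10) * t * q + 2 * g + t * q)).
Proof.
have hn_ := hn; have hT0_ := hT0; have hN_ := hN; have ht0_ := ht0; have ht1_ := ht1; have ht2_ := ht2; have hgm_ := hgm; have hg_ := hg; have hy_ := hy.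
move=> h1 h2.
have h4 := t4000; have hk := key_tn; have hg0 := g0.
have hq : 0 < q by lra.
have htq : t <= q by lra.
have f1 : t * q * (n / (10 * 100)) <= t * q * ((4/10) * q - (34/10) * t).
  by apply: ler_wpM2l; [apply: mulr_ge0; lra | lra].
have f3 : g * t <= g * q by apply: ler_wpM2l.
have f4 : 0 < q * (t * n - (80 * 100) * g) by rewrite mulr_gt0 //; lra.
have f5 : 0 <= t * q * n by rewrite !mulr_ge0 //; lra.
rewrite expr2; lra.
Qed.

Lemma p50_num : 20 * p <= y -> y < 20 * p + 20 -> y / 50 <= p.
Proof.
have hn_ := hn; have hT0_ := hT0; have hN_ := hN; have ht0_ := ht0; have ht1_ := ht1; have ht2_ := ht2; have hgm_ := hgm; have hg_ := hg; have hy_ := hy.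
lra. Qed.

Lemma t17_num : 17 * t < y.
Proof.
have hn_ := hn; have hT0_ := hT0; have hN_ := hN; have ht0_ := ht0; have ht1_ := ht1; have ht2_ := ht2; have hgm_ := hgm; have hg_ := hg; have hy_ := hy.
have := t4000; lra. Qed.

Lemma K_num : (n - 1) / 2 <= k -> 100 * q <= n -> 20 * m <= n + 19 ->
  y * (2 * t * (N + 1) + 2 * m) <= (4/9) * y * k - 3 * y * q - 2 * g.
Proof.
have hn_ := hn; have hT0_ := hT0; have hN_ := hN; have ht0_ := ht0; have ht1_ := ht1; have ht2_ := ht2; have hgm_ := hgm; have hg_ := hg; have hy_ := hy.
move=> h1 h2 h3.
have hT : (40 * 100) * N * t <= n by rewrite -hT0 mulrC.
have hN1 : t * (N + 1) <= t * (2 * N) by apply: ler_wpM2l; lra.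
have hX : 2 * t * (N + 1) + 2 * m <= (4/9) * k - 3 * q - (8/100) * n by lra.
have yp : 0 <= y by lra.
have f1 : y * (2 * t * (N + 1) + 2 * m) <= y * ((4/9) * k - 3 * q - (8/100) * n).
  by apply: ler_wpM2l.
have f2 : 2 * g <= y * ((8/100) * n).
  have g1 : 0 <= gm := ltW gm0.
  have gm1 : gm * ((800 * 100)) <= gm * ((800 * 100) * T0) by apply: ler_wpM2l => //; lra.
  have nn : 0 <= n * n by rewrite mulr_ge0 //; lra.
  have gm2 : gm * (n * n) <= (1 / (800 * 100)) * (n * n) by apply: ler_wpM2r => //; lra.
  have yn : n / 2 * n <= y * n by apply: ler_wpM2r => //; lra.
  rewrite hg expr2; lra.
lra.
Qed.

End Num.

End PD.
Import PD.

Unset Implicit Arguments.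
Local Open Scope ring_scope.

Lemma aux3 (n N w r : nat) : n = (w * N + r)%N -> (r < N)%N -> (N <= w)%N -> (n < N.+1 * w)%N.
Proof. nia. Qed.

Lemma aux4 (n k p t q : nat) : (p * 20 <= n - k)%N -> (40 * 100 * t <= n)%N -> (q * 100 <= n)%N ->
  (2 * k <= n)%N -> (n <= 2 * k + 1)%N -> (10 * 100 <= n)%N ->
  [/\ (p + t <= k)%N, (k + p + t <= n)%N, (q + t <= k)%N & (k + q + t <= n)%N].
Proof. by move=> *; split; lia. Qed.

Lemma aux_half n : (2 * n./2 <= n)%N /\ (n <= 2 * n./2 + 1)%N.
Proof. have := odd_double_half n; rewrite -muln2; case: (odd n) => /= h; lia. Qed.

Lemma aux_NN N T0 n : (0 < N)%N -> T0 = (40 * 100 * N)%N -> (10 * 100 * T0 * N <= n)%N ->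
  [/\ (N * N <= n)%N, (10 * 100 * T0 <= n)%N, (40 * 100 <= T0)%N & (0 < T0)%N].
Proof.
move=> N0 eT h.
have e1 : (10 * 100 * T0 * N = (10 * 100 * (40 * 100)) * (N * N))%N by rewrite eT !mulnA.
have h1 : (N * N <= n)%N by apply: leq_trans h; rewrite e1 leq_pmull.
have h2 : (10 * 100 * T0 <= n)%N by apply: leq_trans h; rewrite leq_pmulr.
have h3 : (40 * 100 <= T0)%N by rewrite eT leq_pmulr.
by split => //; apply: leq_trans h3.
Qed.

Lemma aux5 a b n k : (a + b = n)%N -> a = k -> b = (n - k)%N.
Proof. lia. Qed.

Theorem lemma2p13 (R : realType) (beta : R) :
  0 < beta ->
  exists gamma : R, 0 < gamma /\
  exists n0 : nat, forall n : nat, (n0 <= n)%N ->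
  forall e : rel 'I_n, symmetric e -> irreflexive e ->
  (forall X : {set 'I_n}, #|X| = n./2 ->
     `|(e_between e X (~: X))%:R - (1/2) * #|X|%:R * #|~: X|%:R| <= gamma * (n%:R) ^+ 2) ->
  host_good beta e.
Proof.
move=> b0.
have [N hN] : exists N : nat, beta^-1 < N%:R.
  by eexists; apply: archi_boundP; rewrite invr_ge0 ltW.
have N0 : (0 < N)%N by rewrite -(ltr0n R); apply: lt_trans hN; rewrite invr_gt0.
have hNb : 1 <= N%:R * beta.
  have h : beta^-1 * beta < N%:R * beta by rewrite ltr_pM2r.
  by rewrite mulVf ?gt_eqF // in h; apply: ltW.
pose T0 := (40 * 100 * N)%N.
pose gm : R := ((800 * 100) * T0%:R)^-1.
have T0R : (T0%:R : R) = (40 * 100) * N%:R by rewrite /T0 !natrM.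
have T0p : (0 < T0%:R :> R) by rewrite ltr0n /T0; lia.
have hx : 0 < (800 * 100) * T0%:R :> R by apply: mulr_gt0 => //; lra.
have hgm : gm * ((800 * 100) * T0%:R) = 1 by rewrite /gm mulVf // gt_eqF.
have gm0 : 0 < gm by rewrite /gm invr_gt0.
exists gm; split => //.
exists (10 * 100 * T0 * N)%N => n hn0 e esym eirr H.
set k := n./2.
have hk2 := aux_half n; rewrite -/k in hk2.
have [nNN nT0 T04 T0pos] := aux_NN _ _ _ N0 (erefl T0) hn0.
have kn : (k <= n)%N by case: hk2 => h1 _; apply: leq_trans h1; apply: leq_pmull.
have [X0 [_ cX0]] : exists X0 : {set 'I_n}, X0 \subset [set: 'I_n] /\ #|X0| = k.
  by apply: sub_card; rewrite cardsT card_ord.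
have cY : #|~: X0| = (n - k)%N.
  by apply: (aux5 _ _ _ _ _ cX0); rewrite cardsC card_ord.
pose c0 : R := (1/2) * k%:R * (n - k)%:R.
pose g : R := gm * n%:R ^+ 2.
have hyp : forall X : {set 'I_n}, #|X| = k -> `|Er R e X (~: X) - c0| <= g.
  move=> X cX; have := H X cX; rewrite ebet_Er cX.
  have hc : #|~: X| = (n - k)%N.
    by apply: (aux5 _ _ _ _ _ cX); rewrite cardsC card_ord.
  by rewrite hc.
have g0 : 0 <= g by rewrite /g mulr_ge0 // ?sqr_ge0 // ltW.
pose t := (n %/ T0)%N.
pose p := ((n - k) %/ 20)%N.
pose q := (n %/ 100)%N.
pose w := (n %/ N)%N.
pose m := m_of n.
have t1 : (t * T0 <= n)%N := leq_divM n T0.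
have t2 : (n < t.+1 * T0)%N := ltn_ceil n T0pos.
have t0 : (0 < t)%N by rewrite divn_gt0 //; apply: leq_trans nT0; apply: leq_pmull.
have t4 : (40 * 100 * t <= n)%N by apply: leq_trans t1; rewrite mulnC leq_mul2l T04 orbT.
have p1 : (p * 20 <= n - k)%N := leq_divM _ _.
have p2 : (n - k < p.+1 * 20)%N := ltn_ceil _ (isT : (0 < 20)%N).
have q1 : (q * 100 <= n)%N := leq_divM _ _.
have q2 : (n < q.+1 * 100)%N := ltn_ceil _ (isT : (0 < 100)%N).
have m1 : (m * 20 <= n + 19)%N := leq_divM _ _.
have [hk hn' hkq hnq] := aux4 _ _ _ _ _ p1 t4 q1 (proj1 hk2) (proj2 hk2) (leq_trans (leq_pmulr _ T0pos) nT0).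
have kn' : (k <= n)%N := kn.
have yE : (#|~: X0|%:R : R) = n%:R - k%:R by rewrite cY natrB.
have [hk2a hk2b] := hk2.
have hk2a' : 2 * (k%:R : R) <= n%:R by rewrite -(ler_nat R) natrM in hk2a.
have hk2b' : (n%:R : R) <= 2 * k%:R + 1 by rewrite -(ler_nat R) natrD natrM in hk2b.
have Hn : (10 * 100 : R) <= n%:R.
  have h : (10 * 100 <= n)%N by apply: leq_trans nT0; apply: leq_pmulr.
  by rewrite -(ler_nat R) natrM in h.
have HN : (1 : R) <= N%:R by rewrite ler1n.
have Ht0 : (0 : R) < t%:R by rewrite ltr0n.
have Ht2 : (t%:R : R) * T0%:R <= n%:R by rewrite -natrM ler_nat.
have Ht1 : (n%:R : R) <= 2 * t%:R * T0%:R.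
  have h : (n <= t * T0 + T0)%N by rewrite addnC -mulSn ltnW.
  have h' : (T0 <= t * T0)%N by rewrite leq_pmull.
  have : (n <= 2 * t * T0)%N by rewrite -mulnA mul2n -addnn; apply: (leq_trans h); rewrite leq_add2l.
  by rewrite -(ler_nat R) !natrM.
have Hy : (n%:R : R) / 2 <= #|~: X0|%:R by rewrite yE; lra.
have Hg : g = gm * n%:R ^+ 2 by [].
have P1 : 20 * (p%:R : R) <= #|~: X0|%:R by rewrite cY mulrC -natrM ler_nat.
have P2 : (#|~: X0|%:R : R) < 20 * p%:R + 20.
  by rewrite cY -[20]/(20%:R) -natrM -natrD ltr_nat; move: p2; rewrite mulSn addnC mulnC.
have Q1 : 100 * (q%:R : R) <= n%:R by rewrite mulrC -natrM ler_nat.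
have Q2 : (n%:R : R) < 100 * q%:R + 100.
  by rewrite -[100]/(100%:R) -natrM -natrD ltr_nat; move: q2; rewrite mulSn addnC mulnC.
have M1 : 20 * (m%:R : R) <= n%:R + 19.
  by rewrite mulrC -natrM -[19]/(19%:R) -natrD ler_nat.
have Hk : ((n%:R : R) - 1) / 2 <= k%:R by lra.
have NC1 := NC1_num R t%:R p%:R #|~: X0|%:R g n%:R T0%:R N%:R gm Hn T0R HN Ht0 Ht1 Ht2 hgm Hg Hy P1 P2.
have NC2 := NC2_num R t%:R q%:R #|~: X0|%:R g n%:R T0%:R N%:R gm Hn T0R HN Ht0 Ht1 Ht2 hgm Hg Hy Q1 Q2.
have HP50 := p50_num R t%:R p%:R #|~: X0|%:R g n%:R T0%:R N%:R gm Hn T0R HN Ht0 Ht1 Ht2 hgm Hg Hy P1 P2.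
have H17 := t17_num R t%:R #|~: X0|%:R g n%:R T0%:R N%:R gm Hn T0R HN Ht0 Ht1 Ht2 hgm Hg Hy.
have HK := K_num R t%:R q%:R #|~: X0|%:R g n%:R T0%:R N%:R gm k%:R m%:R Hn T0R HN Ht0 Ht1 Ht2 hgm Hg Hy Hk Q1 M1.
have wN : (w * N <= n)%N := leq_divM n N.
have nE : n = (w * N + n %% N)%N := divn_eq n N.
have rN : (n %% N < N)%N := ltn_pmod n N0.
have Nw : (N <= w)%N by rewrite leq_divRL.
have w0 : (0 < w)%N := leq_trans N0 Nw.
have nw : (n %/ w <= N)%N by rewrite -ltnS ltn_divLR //; apply: (aux3 _ _ _ _ nE rN Nw).
have hB : forall x, ((deg_in e (~: X0) x) %/ w <= N)%N.
  move=> x; apply: leq_trans nw; apply: leq_div2r.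
  by rewrite /deg_in; apply: (leq_trans (max_card _)); rewrite card_ord.
have hw : (w%:R : R) <= beta * n%:R.
  have wN' : (w%:R : R) * N%:R <= n%:R by rewrite -natrM ler_nat.
  have e1 : (w%:R : R) <= w%:R * (N%:R * beta) by rewrite -[X in X <= _]mulr1; apply: ler_wpM2l.
  have e2 : (w%:R : R) * N%:R * beta <= n%:R * beta by apply: ler_wpM2r => //; apply: ltW.
  rewrite mulrA in e1; lra.
have hp : (20 * p <= #|~: X0|)%N by rewrite cY mulnC.
have hy0 : (0 < #|~: X0|)%N by rewrite -(ltr0n R); lra.
have FP := find_pair (R:=R) esym hyp g0 (X:=X0) (beta:=beta) (w:=w) (B:=N) (p:=p) (t:=t)
  w0 hw hB hp HP50 t0 hk hn' hy0 NC1.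
have q0 : (0 < q)%N by rewrite divn_gt0 //; apply: leq_trans nT0; apply: leq_trans (leq_pmulr _ T0pos); [].
have hc0 : c0 = (1/2) * k%:R * #|~: X0|%:R by rewrite /c0 cY.
have KC := K_count esym hyp g0 cX0 q0 t0 H17 hkq hnq hc0 NC2.
have yp : (0 : R) < #|~: X0|%:R by lra.
have hK' : ((2 * t * N.+1 + 2 * m)%N%:R : R) <= #|Kset R e X0|%:R.
  have : (#|~: X0|%:R : R) * (2 * t%:R * (N%:R + 1) + 2 * m%:R) <= #|~: X0|%:R * #|Kset R e X0|%:R.
    by apply: le_trans KC; move: HK; rewrite !mulrA.
  rewrite ler_pM2l // natrD !natrM -addn1 natrD; lra.
rewrite ler_nat in hK'.
have [f1 [f2 [b1 b2 b3 b4]]] := build (K := Kset R e X0)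
  (P := fun a a' => good_pair beta e (~: X0) a a') (m := m) (L := (2 * t * N.+1)%N) FP hK' (leqnn m).
exists X0, (fun i : 'I_(m_of n) => f1 i), (fun i : 'I_(m_of n) => f2 i); split => //.
- split.
  + by move=> i j /(b2 _ _ (ltn_ord i) (ltn_ord j)) /val_inj.
  + by move=> i j /(b3 _ _ (ltn_ord i) (ltn_ord j)) /val_inj.
  + by move=> i j; apply: b4.
- move=> i; have [k1 k2 _] := b1 _ (ltn_ord i).
  by move: k1 k2; rewrite !inE => /andP[-> _] /andP[-> _].
- by move=> i; have [_ _ h] := b1 _ (ltn_ord i); exact: h.
Qed.
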